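(* If $\dot G\in\mathcal C_1\cup\mathcal C_4\cup\mathcal C_5$ is a connected, non-complete, $5$-regular and $1$ net-regular SRSG with parameters $(n,5,a,b,c)$, then $(a,b)\neq(-2,1)$ and $(a,b)\neq(-2,-1)$.
   Context: A signed graph $\dot G=(G,\sigma)$ is a simple graph $G$ with $\sigma:E(G)\to\{\pm1\}$; adjacency matrix $A_{\dot G}$ has entries $\sigma(v_iv_j)$ for adjacent vertices and $0$ otherwise. Degree and connectedness refer to $G$; net-degree is $d^+(v)-d^-(v)$; $\rho$ net-regular means all net-degrees equal $\rho$. $\dot G$ on $n$ vertices is an SRSG if it is neither homogeneous complete nor edgeless and there are $r\in\mathbb N$, $a,b,c\in\mathbb Z$ with $(A^2_{\dot G})_{ii}=r$, $(A^2_{\dot G})_{ij}=a$ for positive edges, $b$ for negative edges, $c$ for distinct non-adjacent pairs; parameters $(n,r,a,b,c)$. Classes: $\mathcal C_1$: $a=-b$ and (complete, or non-complete with $c\neq0$); $\mathcal C_4$: $a\ne-b$, non-complete, $c=0$; $\mathcal C_5$: $a\neq-b$, non-complete, $c\notin\{0,\frac{a+b}{2}\}$. *)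

(* Defs.v *)
From mathcomp Require Import all_boot all_order all_algebra.
Set Implicit Arguments. Unset Strict Implicit. Unset Printing Implicit Defensive.
Import Order.TTheory GRing.Theory Num.Theory.
Local Open Scope ring_scope.

(* A signed graph on a finite vertex type V: a simple graph given by an
   adjacency relation e (symmetric, irreflexive) together with a signature
   s : V -> V -> bool (true = positive edge, false = negative edge),
   symmetric on edges. *)
Definition signed_graph (V : finType) (e : rel V) (s : V -> V -> bool) : Prop :=
  symmetric e /\ irreflexive e /\ (forall x y, e x y -> s x y = s y x).

Definition sadj (V : finType) (e : rel V) (s : V -> V -> bool) (x y : V) : int :=
  if e x y then (if s x y then 1 else -1) else 0.

Definition sadj2 (V : finType) (e : rel V) (s : V -> V -> bool) (x y : V) : int :=
  \sum_(z : V) sadj e s x z * sadj e s z y.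

Definition sdeg (V : finType) (e : rel V) (x : V) : nat := #|[set y | e x y]|.
Definition pdeg (V : finType) (e : rel V) (s : V -> V -> bool) (x : V) : nat :=
  #|[set y | e x y && s x y]|.
Definition ndeg (V : finType) (e : rel V) (s : V -> V -> bool) (x : V) : nat :=
  #|[set y | e x y && ~~ s x y]|.
Definition netdeg (V : finType) (e : rel V) (s : V -> V -> bool) (x : V) : int :=
  (pdeg e s x)%:Z - (ndeg e s x)%:Z.

Definition regular (V : finType) (e : rel V) (r : nat) : Prop :=
  forall x, sdeg e x = r.
Definition net_regular (V : finType) (e : rel V) (s : V -> V -> bool) (rho : int) : Prop :=
  forall x, netdeg e s x = rho.

Definition connected_graph (V : finType) (e : rel V) : Prop :=
  forall x y, connect e x y.
Definition complete_graph (V : finType) (e : rel V) : Prop :=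
  forall x y, x != y -> e x y.
Definition edgeless (V : finType) (e : rel V) : Prop :=
  forall x y, ~~ e x y.
Definition homogeneous (V : finType) (e : rel V) (s : V -> V -> bool) : Prop :=
  (forall x y, e x y -> s x y) \/ (forall x y, e x y -> ~~ s x y).
Definition homogeneous_complete (V : finType) (e : rel V) (s : V -> V -> bool) : Prop :=
  complete_graph e /\ homogeneous e s.

Definition SRSG (V : finType) (e : rel V) (s : V -> V -> bool)
    (n r : nat) (a b c : int) : Prop :=
  signed_graph e s /\ #|V| = n /\
  ~ homogeneous_complete e s /\ ~ edgeless e /\
  (forall x, sadj2 e s x x = r%:Z) /\
  (forall x y, e x y -> s x y -> sadj2 e s x y = a) /\
  (forall x y, e x y -> ~~ s x y -> sadj2 e s x y = b) /\
  (forall x y, x != y -> ~~ e x y -> sadj2 e s x y = c).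

Definition classC1 (V : finType) (e : rel V) (a b c : int) : Prop :=
  a = - b /\ (complete_graph e \/ (~ complete_graph e /\ c <> 0)).
Definition classC4 (V : finType) (e : rel V) (a b c : int) : Prop :=
  a <> - b /\ ~ complete_graph e /\ c = 0.
(* c <> (a+b)/2 is stated as 2c <> a+b to stay in the integers *)
Definition classC5 (V : finType) (e : rel V) (a b c : int) : Prop :=
  a <> - b /\ ~ complete_graph e /\ c <> 0 /\ c *+ 2 <> a + b.

(* Main.v *)
Require Import Defs.
From mathcomp Require Import all_boot all_order all_algebra.
From mathcomp Require Import zify.
Import Order.TTheory GRing.Theory Num.Theory.
Local Open Scope ring_scope.

Definition ind (b : bool) : int := if b then 1 else 0.

Definition wb (p q r : bool) : int :=
  match p, q, r with
  | true, true, true => 0 | true, true, false => -1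
  | true, false, true => -1 | true, false, false => 4
  | false, true, true => 2 | false, true, false => -2
  | false, false, true => -2 | false, false, false => 0
  end.

Definition Wf (V : finType) (e : rel V) (s : V -> V -> bool) (x y z : V) : int :=
  if [&& e x y, e x z & e y z] then wb (s x y) (s x z) (s y z) else 0.
Arguments Wf {V}.

Lemma Wcyc (V : finType) (e : rel V) (s : V -> V -> bool) (H : signed_graph e s)
  (x y z : V) : Wf e s x y z + Wf e s y z x + Wf e s z x y = 0.
Proof.
case: H => sym [irr ss]; rewrite /Wf (sym y x) (sym z x) (sym z y).
case Exy: (e x y); case Exz: (e x z); case Eyz: (e y z) => //=.
rewrite -(ss _ _ Exy) -(ss _ _ Exz) -(ss _ _ Eyz).
by case: (s x y); case: (s x z); case: (s y z); rewrite /wb; lia.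
Qed.

Lemma Wsum0 (V : finType) (e : rel V) (s : V -> V -> bool) (H : signed_graph e s) :
  \sum_x \sum_y \sum_z Wf e s x y z = 0.
Proof.
set S := (X in X = 0).
have r1 : S = \sum_x \sum_y \sum_z Wf e s y z x.
  symmetry; rewrite exchange_big; apply eq_bigr => y _; rewrite exchange_big //.
have r2 : S = \sum_x \sum_y \sum_z Wf e s z x y.
  symmetry; under eq_bigr => x _ do rewrite exchange_big.
  by rewrite exchange_big.
have : S + (\sum_x \sum_y \sum_z Wf e s y z x) + (\sum_x \sum_y \sum_z Wf e s z x y) = 0.
  rewrite /S -!big_split; apply big1 => x _; rewrite -!big_split.
  apply big1 => y _; rewrite -!big_split; apply big1 => z _; exact: Wcyc.
rewrite -r1 -r2 => h; lia.
Qed.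

Lemma card_ind (V : finType) (P : pred V) : (#|[set z | P z]| : int) = \sum_z ind (P z).
Proof.
rewrite -sum1_card -natz natr_sum big_mkcond /=; apply eq_bigr => z _.
by rewrite inE /ind; case: (P z).
Qed.
Arguments card_ind {V}.

Lemma sum_ind_eq (V : finType) (x : V) (b : bool) : \sum_z ind ((z == x) && b) = ind b.
Proof.
rewrite (bigD1 x) //= eqxx big1 ?addr0 // => z /negbTE ->; by [].
Qed.

Lemma deg_sums (V : finType) (e : rel V) (s : V -> V -> bool)
  (Hreg : regular e 5) (Hnet : net_regular e s 1) (y : V) :
  \sum_z ind (e y z && s y z) = 3 /\ \sum_z ind (e y z && ~~ s y z) = 2.
Proof.
have h1 := Hreg y; have h2 := Hnet y.
rewrite /netdeg /pdeg /ndeg in h2.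
rewrite (card_ind (fun z => e y z && s y z)) (card_ind (fun z => e y z && ~~ s y z)) in h2.
have h1' : (#|[set z | e y z]| : int) = 5 by rewrite /sdeg in h1; rewrite h1.
rewrite (card_ind (fun z => e y z)) in h1'.
have h3 : \sum_z ind (e y z) = \sum_z ind (e y z && s y z) + \sum_z ind (e y z && ~~ s y z).
  by rewrite -big_split; apply eq_bigr => z _; rewrite /ind; case: (e y z); case: (s y z).
split; lia.
Qed.

Definition cnt (V : finType) (P : V -> bool) : int := \sum_z ind (P z).
Arguments cnt {V}.

Lemma cnt_ge0 (V : finType) (P : V -> bool) : 0 <= cnt P.
Proof. by apply: sumr_ge0 => z _; rewrite /ind; case: (P z). Qed.
Arguments cnt_ge0 {V}.
Arguments deg_sums {V e s}.
Arguments sum_ind_eq {V}.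

Lemma Wy (V : finType) (e : rel V) (s : V -> V -> bool) (n : nat) (b c : int)
  (H : SRSG e s n 5 (-2) b c) (Hb : b = 1 \/ b = -1)
  (Hreg : regular e 5) (Hnet : net_regular e s 1) (x y : V) :
  \sum_z Wf e s x y z <= -2 * sadj e s x y.
Proof.
case: (H) => [[sym [irr ss]] [_ [_ [_ [_ [Ha [Hbb _]]]]]]].
case Exy: (e x y); last first.
  by rewrite /sadj Exy big1 // => z _; rewrite /Wf Exy.
have Syx : s y x = s x y by rewrite (ss _ _ Exy).
have Eyx : e y x by rewrite sym.
pose cU := cnt (fun z => [&& e x z, s x z, e y z & s y z]).
pose cV := cnt (fun z => [&& e x z, s x z, e y z & ~~ s y z]).
pose cU' := cnt (fun z => [&& e x z, ~~ s x z, e y z & s y z]).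
pose cV' := cnt (fun z => [&& e x z, ~~ s x z, e y z & ~~ s y z]).
have g1 := cnt_ge0 (fun z => [&& e x z, s x z, e y z & s y z]).
have g2 := cnt_ge0 (fun z => [&& e x z, s x z, e y z & ~~ s y z]).
have g3 := cnt_ge0 (fun z => [&& e x z, ~~ s x z, e y z & s y z]).
have g4 := cnt_ge0 (fun z => [&& e x z, ~~ s x z, e y z & ~~ s y z]).
have F1 : sadj2 e s x y = cU - cV - cU' + cV'.
  rewrite /sadj2 /cU /cV /cU' /cV' /cnt -!sumrN -!big_split /=.
  apply eq_bigr => z _; rewrite /sadj /ind (sym z y).
  case Eyz: (e y z); last by rewrite mulr0 andbF andbF andbF andbF.
  rewrite -(ss _ _ Eyz).
  by case: (e x z); case: (s x z); case: (s y z).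
have [dy1 dy2] := deg_sums Hreg Hnet y.
have [dx1 dx2] := deg_sums Hreg Hnet x.
have B1 : cU + cU' + ind (s x y) <= 3.
  rewrite -dy1 -(sum_ind_eq x) /cU /cU' /cnt -!big_split; apply: ler_sum => z _ /=.
  have [->|_] := eqVneq z x; first by rewrite irr Eyx Syx /ind; case: (s x y).
  by rewrite /ind; case: (e x z); case: (s x z); case: (e y z); case: (s y z).
have B2 : cV + cV' + ind (~~ s x y) <= 2.
  rewrite -dy2 -(sum_ind_eq x) /cV /cV' /cnt -!big_split; apply: ler_sum => z _ /=.
  have [->|_] := eqVneq z x; first by rewrite irr Eyx Syx /ind; case: (s x y).
  by rewrite /ind; case: (e x z); case: (s x z); case: (e y z); case: (s y z).
have B3 : cU + cV + ind (s x y) <= 3.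
  rewrite -dx1 -(sum_ind_eq y) /cU /cV /cnt -!big_split; apply: ler_sum => z _ /=.
  have [->|_] := eqVneq z y; first by rewrite irr Exy /ind; case: (s x y); rewrite ?andbF.
  by rewrite /ind; case: (e x z); case: (s x z); case: (e y z); case: (s y z).
have B4 : cU' + cV' + ind (~~ s x y) <= 2.
  rewrite -dx2 -(sum_ind_eq y) /cU' /cV' /cnt -!big_split; apply: ler_sum => z _ /=.
  have [->|_] := eqVneq z y; first by rewrite irr Exy /ind; case: (s x y); rewrite ?andbF.
  by rewrite /ind; case: (e x z); case: (s x z); case: (e y z); case: (s y z).
case Sxy: (s x y).
- have F2 : \sum_z Wf e s x y z = - cV - cU' + 4 * cV'.
    rewrite /cV /cU' /cV' /cnt mulr_sumr -!sumrN -!big_split /=.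
    apply eq_bigr => z _; rewrite /Wf /ind Exy Sxy /=.
    by case: (e x z); case: (s x z); case: (e y z); case: (s y z).
  have := Ha x y Exy Sxy; rewrite Sxy /= in B1 B2 B3 B4.
  rewrite F2 F1 /sadj Exy Sxy /ind /= in B1 B2 B3 B4 *; lia.
- have F2 : \sum_z Wf e s x y z = 2 * cU - 2 * cV - 2 * cU'.
    rewrite /cU /cV /cU' /cnt !mulr_sumr -!sumrN -!big_split /=.
    apply eq_bigr => z _; rewrite /Wf /ind Exy Sxy /=.
    by case: (e x z); case: (s x z); case: (e y z); case: (s y z).
  have := Hbb x y Exy (negbT Sxy).
  rewrite F2 F1 /sadj Exy Sxy /ind /= in B1 B2 B3 B4 *; case: Hb => ->; lia.
Qed.

Arguments Wy {V e s n b c}.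
Arguments Wsum0 {V e s}.

Lemma no_srsg (V : finType) (e : rel V) (s : V -> V -> bool) (n : nat) (b c : int)
  (H : SRSG e s n 5 (-2) b c) (Hb : b = 1 \/ b = -1)
  (Hreg : regular e 5) (Hnet : net_regular e s 1) : False.
Proof.
have Hsg : signed_graph e s by case: H.
have Hne : ~ edgeless e by case: H => _ [_ [_ [Hne _]]].
have Wx : forall x, \sum_y \sum_z Wf e s x y z <= -2.
  move=> x; apply: (le_trans (ler_sum _ (fun y _ => Wy H Hb Hreg Hnet x y))).
  rewrite -mulr_sumr.
  have -> : \sum_y sadj e s x y = 1.
    have h := Hnet x; rewrite /netdeg /pdeg /ndeg in h.
    rewrite (card_ind (fun z => e x z && s x z)) (card_ind (fun z => e x z && ~~ s x z)) in h.
    rewrite -h -sumrN -big_split; apply eq_bigr => z _ /=.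
    by rewrite /sadj /ind; case: (e x z); case: (s x z).
  by [].
have [x0 _] : exists x : V, true.
  case: (pickP (fun _ : V => true)) => [x0 _|h]; first by exists x0.
  by exfalso; apply: Hne => x y; have := h x.
have := Wsum0 Hsg; rewrite (bigD1 x0) //=.
have h : \sum_(i | i != x0) \sum_y \sum_z Wf e s i y z <= \sum_(i | i != x0) (0 : int).
  by apply: ler_sum => i _; apply: le_trans (Wx i) _.
rewrite big1_eq in h; move=> h2; have := lerD (Wx x0) h; by rewrite h2.
Qed.

Arguments no_srsg {V e s n b c}.

Theorem lemma3p10 (V : finType) (e : rel V) (s : V -> V -> bool)
    (n : nat) (a b c : int) :
  SRSG e s n 5 a b c ->
  classC1 e a b c \/ classC4 e a b c \/ classC5 e a b c ->
  connected_graph e -> ~ complete_graph e ->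
  regular e 5 -> net_regular e s 1 ->
  (a, b) <> (-2, 1) /\ (a, b) <> (-2, -1).
Proof.
move=> H _ _ _ Hreg Hnet; split => -[Ha Hb]; subst a b.
- by apply: (no_srsg H _ Hreg Hnet); left.
- by apply: (no_srsg H _ Hreg Hnet); right.
Qed.
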